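(* Let $r\ge 4$ and let $w:E(K_r)\to\mathbb{R}_{>0}$ be a positive edge-weighting of the complete graph $K_r$. For each edge $e$ let $C_w(e)$ be the maximum of $w(C)=\sum_{f\in E(C)}w(f)$ over all cycles $C$ of $K_r$ containing $e$, and set $\phi(e)=w(e)/C_w(e)$. If $\sum_{e\in E(K_r)}\frac{w(e)}{C_w(e)}=\frac{r-1}{2}$, then there exists $a:V(K_r)\to\mathbb{R}$ such that $\phi(uv)=\frac{a(u)+a(v)}{2}$ for all edges $uv$. *)

(* Defs.v *)
(* The complete graph K_r has vertex set 'I_r; its edges are
   the unordered pairs {u,v} with u != v.  An edge weighting is a symmetric
   function w : 'I_r -> 'I_r -> R (only values with u != v matter). *)
From HB Require Import structures.
From mathcomp Require Import all_boot all_order all_algebra.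
From mathcomp Require Import reals.
Set Implicit Arguments. Unset Strict Implicit. Unset Printing Implicit Defensive.
Import Order.TTheory GRing.Theory Num.Theory.
Local Open Scope ring_scope.

Section Cycles.
Variables (R : realType) (r : nat) (w : 'I_r -> 'I_r -> R).

Definition cyc_edges (s : seq 'I_r) : seq ('I_r * 'I_r) := zip s (rot 1 s).

Definition is_cycle (s : seq 'I_r) : bool := uniq s && (3 <= size s)%N.

Definition cyc_has_edge (s : seq 'I_r) (u v : 'I_r) : bool :=
  has (fun p => (p == (u, v)) || (p == (v, u))) (cyc_edges s).

Definition cyc_weight (s : seq 'I_r) : R :=
  \sum_(p <- cyc_edges s) w p.1 p.2.

(* Cycles have at most r
   vertices; we range over all k-tuples, k <= r.  The default 0 of the max is
   harmless: weights are positive and for r >= 3 every edge lies on a cycle. *)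
Definition Cw (u v : 'I_r) : R :=
  \big[Num.max/0]_(k < r.+1)
    \big[Num.max/0]_(t : k.-tuple 'I_r | is_cycle t && cyc_has_edge t u v)
      cyc_weight t.

Definition phi (u v : 'I_r) : R := w u v / Cw u v.

End Cycles.

(* Main.v *)
Require Import Defs.
From HB Require Import structures.
From mathcomp Require Import all_boot all_order all_algebra all_fingroup.
From mathcomp Require Import reals.
From mathcomp Require Import zify ring lra.
Import Order.TTheory GRing.Theory Num.Theory.
Local Open Scope ring_scope.

Lemma rot_enum_ord n : rot 1 (enum 'I_n) = map (@ordS n) (enum 'I_n).
Proof.
case: n => [|n]; first by rewrite !enum_ord0.
apply: (inj_map val_inj); rewrite map_rot val_enum_ord.
have -> : [seq val i | i <- [seq ordS i | i <- enum 'I_n.+1]] =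
   map (fun m => (m.+1 %% n.+1)%N) (map val (enum 'I_n.+1)) by rewrite -!map_comp.
rewrite val_enum_ord.
have -> : iota 0 n.+1 = rcons (iota 0 n) n by rewrite -cats1 -addn1 iotaD.
rewrite map_rcons modnn.
have -> : [seq (m.+1 %% n.+1)%N | m <- iota 0 n] = iota 1 n.
  rewrite (iotaDl 1 0) -[in RHS](map_id (iota 0 n)) -map_comp; apply/eq_in_map => m.
  by rewrite mem_iota /= add0n => hm; rewrite modn_small.
case: n => [|m] //=; rewrite rot1_cons.
have e : rcons (iota 1 m) m.+1 = iota 1 m.+1.
  by rewrite -cats1 -(addn1 m) iotaD addnC.
by rewrite e.
Qed.

Lemma zip_enum (T : Type) n (f : 'I_n -> T) :
  zip (map f (enum 'I_n)) (rot 1 (map f (enum 'I_n))) =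
  map (fun i => (f i, f (ordS i))) (enum 'I_n).
Proof. by rewrite -map_rot rot_enum_ord -map_comp zip_map. Qed.

Section S.
Variables (R : realType) (r : nat) (w : 'I_r -> 'I_r -> R).

Lemma Cw_ge (s : seq 'I_r) (u v : 'I_r) : size s == r -> is_cycle s ->
  cyc_has_edge s u v -> cyc_weight w s <= Cw w u v.
Proof.
move=> hs hc he; rewrite /Cw (bigD1 ord_max) //= le_max; apply/orP; left.
rewrite (bigD1 (Tuple hs)) /= ?hc ?he // le_max lexx //.
Qed.

Lemma cyc_weight_perm (s : 'S_r) :
  cyc_weight w (map s (enum 'I_r)) = \sum_(i < r) w (s i) (s (ordS i)).
Proof. by rewrite /cyc_weight /cyc_edges zip_enum big_map big_enum. Qed.

Lemma cyc_has_perm (s : 'S_r) (i : 'I_r) :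
  cyc_has_edge (map s (enum 'I_r)) (s i) (s (ordS i)).
Proof.
rewrite /cyc_has_edge /cyc_edges zip_enum has_map; apply/hasP; exists i.
  by rewrite mem_enum.
by rewrite /= eqxx.
Qed.

Lemma is_cycle_perm (s : 'S_r) : (3 <= r)%N -> is_cycle (map s (enum 'I_r)).
Proof.
by move=> h; rewrite /is_cycle size_map size_enum_ord h map_inj_uniq ?enum_uniq //; apply: perm_inj.
Qed.


Hypothesis hr : (4 <= r)%N.
Hypothesis wsym : forall u v : 'I_r, w u v = w v u.
Hypothesis wpos : forall u v : 'I_r, u != v -> 0 < w u v.

Lemma ordS_neq (i : 'I_r) : ordS i != i.
Proof.
apply/negP => /eqP /(congr1 val) /=; have := ltn_ord i.
case: (ltnP i.+1 r) => h1 h2.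
  by rewrite modn_small // => /eqP; rewrite -[X in _ == X]addn0 -addn1 eqn_add2l.
have e : i.+1 = r by apply/eqP; rewrite eqn_leq h1 h2.
rewrite e modnn => h0; move: e; rewrite -h0 => e1; move: hr; by rewrite -e1.
Qed.

Let i0 : 'I_r := Ordinal (leq_trans (isT : (0 < 4)%N) hr).

Definition Wt (s : 'S_r) := \sum_(i < r) w (s i) (s (ordS i)).

Lemma Wt_pos s : 0 < Wt s.
Proof.
rewrite /Wt (bigD1 i0) //= ltr_pwDl //.
  by apply: wpos; rewrite (inj_eq perm_inj) eq_sym ordS_neq.
by apply: sumr_ge0 => i _; apply/ltW/wpos; rewrite (inj_eq perm_inj) eq_sym ordS_neq.
Qed.

Lemma Cw_ge_Wt s i : Wt s <= Cw w (s i) (s (ordS i)).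
Proof.
rewrite /Wt -cyc_weight_perm; apply: Cw_ge.
- by rewrite size_map size_enum_ord.
- by apply: is_cycle_perm; apply: leq_trans hr.
- exact: cyc_has_perm.
Qed.

Lemma Cw_sym u v : Cw w u v = Cw w v u.
Proof.
rewrite /Cw; apply: eq_bigr => k _; apply: eq_bigl => t.
by congr (_ && _); rewrite /cyc_has_edge; apply: eq_has => p; rewrite orbC.
Qed.

Lemma phi_sym u v : phi w u v = phi w v u.
Proof. by rewrite /phi wsym Cw_sym. Qed.

Lemma phi_le (s : 'S_r) (i : 'I_r) : phi w (s i) (s (ordS i)) <= w (s i) (s (ordS i)) / Wt s.
Proof.
have hw : 0 < w (s i) (s (ordS i)).
  by apply: wpos; rewrite (inj_eq perm_inj) eq_sym ordS_neq.
rewrite /phi ler_pM2l // lef_pV2 ?Cw_ge_Wt // posrE ?Wt_pos //.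
exact: lt_le_trans (Wt_pos s) (Cw_ge_Wt s i).
Qed.

Lemma sum_w_Wt (s : 'S_r) : \sum_i w (s i) (s (ordS i)) / Wt s = 1.
Proof. by rewrite -mulr_suml divff // gt_eqF // Wt_pos. Qed.


Lemma exists_tau (j k j' k' : 'I_r) : j != k -> j' != k' ->
  exists tau : 'S_r, tau j' = j /\ tau k' = k.
Proof.
move=> hjk hjk'.
set m := tperm j' j k'.
have hm : m != j.
  by rewrite -[X in _ != X](tpermL j' j) (inj_eq perm_inj) eq_sym.
exists (tperm j' j * tperm m k)%g; rewrite !permM tpermL; split.
  by rewrite tpermD // eq_sym.
by rewrite tpermL.
Qed.

Definition P j k := \sum_(s : 'S_r) phi w (s j) (s k).

Lemma P_const j k j' k' : j != k -> j' != k' -> P j k = P j' k'.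
Proof.
move=> h h'; have [tau [e1 e2]] := @exists_tau j k j' k' h h'.
rewrite /P [RHS](reindex_inj (mulgI tau)) /=.
by apply: eq_bigr => s _; rewrite !permM e1 e2.
Qed.

Lemma sum_split (F : 'I_r -> 'I_r -> R) :
  \sum_(u < r) \sum_(v < r | u != v) F u v =
  \sum_(u < r) \sum_(v < r | (u < v)%N) F u v + \sum_(u < r) \sum_(v < r | (u < v)%N) F v u.
Proof.
have -> : \sum_(u < r) \sum_(v < r | (u < v)%N) F v u = \sum_(u < r) \sum_(v < r | (v < u)%N) F u v.
  rewrite (exchange_big_dep xpredT) //.
rewrite -big_split /=; apply: eq_bigr => u _.
rewrite (bigID (fun v : 'I_r => (u < v)%N)) /=; congr (_ + _); apply: eq_bigl => v.
  by rewrite andb_idl // => h; rewrite -val_eqE /= neq_ltn h.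
by rewrite -val_eqE /= neq_ltn; case: ltngtP.
Qed.


Lemma sum_neq_const (j : 'I_r) (c : R) : \sum_(k < r | j != k) c = c *+ r.-1.
Proof.
have : \sum_(k < r) c = c + \sum_(k < r | k != j) c by rewrite (bigD1 j).
rewrite sumr_const card_ord => h; apply: (@addrI _ c); rewrite -mulrS (ltn_predK hr) h; congr (_ + _).
by apply: eq_bigl => k; rewrite eq_sym.
Qed.

Lemma sumG (hsum : \sum_(u < r) \sum_(v < r | (u < v)%N) phi w u v = (r%:R - 1) / 2) :
  \sum_(s : 'S_r) \sum_(i < r) phi w (s i) (s (ordS i)) = r`!%:R.
Proof.
set P0 := P i0 (ordS i0).
have hi0 : i0 != ordS i0 by rewrite eq_sym ordS_neq.
have hD : \sum_(u < r) \sum_(v < r | u != v) phi w u v = r%:R - 1.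
  rewrite sum_split.
  under [X in _ + X]eq_bigr => u _ do under eq_bigr => v _ do rewrite phi_sym.
  by rewrite hsum -splitr.
have hA : \sum_(s : 'S_r) \sum_(j < r) \sum_(k < r | j != k) phi w (s j) (s k)
          = r`!%:R * (r%:R - 1).
  transitivity (\sum_(s : 'S_r) (r%:R - 1 : R)).
    apply: eq_bigr => s _; rewrite -hD [RHS](reindex_inj (@perm_inj _ s)) /=.
    apply: eq_bigr => j _; rewrite [RHS](reindex_inj (@perm_inj _ s)) /=.
    by apply: eq_bigl => k; rewrite (inj_eq perm_inj).
  by rewrite sumr_const card_Sn mulr_natl.
have hB : \sum_(s : 'S_r) \sum_(j < r) \sum_(k < r | j != k) phi w (s j) (s k)
          = (r%:R * (r%:R - 1)) * P0.
  rewrite exchange_big /=.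
  transitivity (\sum_(j < r) \sum_(k < r | j != k) P0).
    apply: eq_bigr => j _; rewrite exchange_big /=; apply: eq_bigr => k hk.
    exact: P_const.
  under eq_bigr => j _ do rewrite sum_neq_const.
  have hr1 : (r.-1)%:R = r%:R - 1 :> R by rewrite -subn1 natrB // ltnW // (leq_trans _ hr).
  by rewrite sumr_const card_ord -mulrnA -[LHS]mulr_natl natrM hr1 [_ * r%:R]mulrC.
have hC : r%:R * P0 = r`!%:R.
  apply: (@mulIf _ (r%:R - 1)).
    by rewrite subr_eq0 pnatr_eq1; apply/eqP => e; move: hr; rewrite e.
  by rewrite -hA hB mulrAC.
rewrite exchange_big /= -hC.
transitivity (\sum_(i < r) P0).
  apply: eq_bigr => i _; apply: P_const => //; by rewrite eq_sym ordS_neq.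
by rewrite sumr_const card_ord mulr_natl.
Qed.


Lemma Heq (hsum : \sum_(u < r) \sum_(v < r | (u < v)%N) phi w u v = (r%:R - 1) / 2)
  (s : 'S_r) (i : 'I_r) : Cw w (s i) (s (ordS i)) = Wt s.
Proof.
have hle : forall s : 'S_r,
    0 <= \sum_(i < r) (w (s i) (s (ordS i)) / Wt s - phi w (s i) (s (ordS i))).
  by move=> t; apply: sumr_ge0 => j _; rewrite subr_ge0 phi_le.
have h1 : \sum_(t : 'S_r) \sum_(i < r) (w (t i) (t (ordS i)) / Wt t - phi w (t i) (t (ordS i))) = 0.
  under eq_bigr => t _ do rewrite sumrB sum_w_Wt.
  by rewrite sumrB sumG // sumr_const card_Sn subrr.
have h2 := psumr_eq0P (fun t _ => hle t) h1 (i := s) isT.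
have h3 : w (s i) (s (ordS i)) / Wt s - phi w (s i) (s (ordS i)) = 0.
  by apply: (psumr_eq0P _ h2) => // j _; rewrite subr_ge0 phi_le.
move/eqP: h3; rewrite subr_eq0 /phi => /eqP.
have hw : w (s i) (s (ordS i)) != 0.
  by rewrite gt_eqF // wpos // (inj_eq perm_inj) eq_sym ordS_neq.
by move=> /(mulfI hw) /invr_inj.
Qed.


Lemma perm_of_seq (s : seq 'I_r) : uniq s -> size s = r ->
  exists σ : 'S_r, map σ (enum 'I_r) = s.
Proof.
move=> us ss.
have inj : injective (fun i : 'I_r => nth i s i).
  move=> i j /= e; apply/val_inj/eqP.
  rewrite -(@nth_uniq _ i s i j) ?ss //.
  by rewrite e [nth i s j](set_nth_default j) ?ss.
exists (perm inj).
apply: (@eq_from_nth _ i0); first by rewrite size_map size_enum_ord ss.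
move=> k; rewrite size_map size_enum_ord => hk.
rewrite (nth_map i0) ?size_enum_ord // permE /=.
have -> : nth i0 (enum 'I_r) k = Ordinal hk by apply: val_inj; rewrite /= nth_enum_ord.
by rewrite /= (set_nth_default i0) ?ss.
Qed.

Lemma perm_nth (σ : 'S_r) s j : map σ (enum 'I_r) = s -> σ j = nth i0 s j.
Proof. by move=> <-; rewrite (nth_map i0) ?size_enum_ord // nth_ord_enum. Qed.

Lemma extend (pre : seq 'I_r) : uniq pre ->
  exists rest, uniq (pre ++ rest) /\ size (pre ++ rest) = r.
Proof.
move=> up; exists [seq x <- enum 'I_r | x \notin pre].
have hu : uniq (pre ++ [seq x <- enum 'I_r | x \notin pre]).
  rewrite cat_uniq up filter_uniq ?enum_uniq // andbT /=.
  by apply/hasP => -[x]; rewrite mem_filter => /andP[hx _] hx'; rewrite hx' in hx.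
split => //.
have hp : perm_eq (pre ++ [seq x <- enum 'I_r | x \notin pre]) (enum 'I_r).
  apply: uniq_perm => //; first exact: enum_uniq.
  by move=> x; rewrite mem_cat mem_filter mem_enum andbT orbN.
by rewrite (perm_size hp) size_enum_ord.
Qed.


Lemma ilast_lt : (r.-1 < r)%N. Proof. by rewrite ltn_predL; lia. Qed.
Let ilast : 'I_r := Ordinal ilast_lt.

Lemma ordS_ilast : ordS ilast = i0.
Proof. by apply: val_inj; rewrite /= prednK ?modnn //; lia. Qed.

Lemma Qlem (hsum : \sum_(u < r) \sum_(v < r | (u < v)%N) phi w u v = (r%:R - 1) / 2)
  (a b c d : 'I_r) : uniq [:: a; b; c; d] -> w a b + w c d = w a c + w b d.
Proof.
move=> u1; have [rest [u1' s1]] := extend _ u1.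
have hp : perm_eq ([:: a] ++ [:: c] ++ [:: b] ++ (d :: rest))
                  ([:: a] ++ [:: b] ++ [:: c] ++ (d :: rest)).
  by rewrite perm_cat2l perm_catCA.
have u2 : uniq ([:: a; c; b; d] ++ rest) by rewrite (perm_uniq hp).
have s2 : size ([:: a; c; b; d] ++ rest) = r by move: s1; rewrite !size_cat.
have [σ1 e1] := perm_of_seq _ u1' s1.
have [σ2 e2] := perm_of_seq _ u2 s2.
have hW1 := Heq hsum σ1 ilast; have hW2 := Heq hsum σ2 ilast.
rewrite ordS_ilast (perm_nth _ _ ilast e1) (perm_nth _ _ i0 e1) in hW1.
rewrite ordS_ilast (perm_nth _ _ ilast e2) (perm_nth _ _ i0 e2) in hW2.
have er : r.-1 = (r - 4).+3 by lia.
move: hW1 hW2; rewrite /= er /= => hW1 hW2.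
have := hW1; rewrite hW2 /Wt -!cyc_weight_perm e1 e2.
rewrite /cyc_weight /cyc_edges /= !big_cons /= (wsym c b).
move=> h; lra.
Qed.

Lemma avoid (l : seq 'I_r) : (size l < r)%N -> exists x, x \notin l.
Proof.
move=> hl; apply/existsP; apply: contraLR hl; rewrite negb_exists => /forallP hall.
rewrite -leqNgt; apply: leq_trans (card_size l).
rewrite -[X in (X <= _)%N]card_ord; apply: subset_leq_card.
by apply/subsetP => x _; have := hall x; rewrite negbK.
Qed.

Section E.
Hypothesis Q : forall a b c d : 'I_r, a != b -> a != c -> a != d -> b != c ->
  b != d -> c != d -> w a b + w c d = w a c + w b d.

Let f u p q := w u p + w u q - w p q.

Lemma fsym u p q : f u p q = f u q p.
Proof. by rewrite /f (wsym p q) (addrC (w u p)). Qed.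

Lemma changeR u p q q' : u != p -> u != q -> u != q' -> p != q -> p != q' ->
  f u p q = f u p q'.
Proof.
move=> h1 h2 h3 h4 h5; case: (eqVneq q q') => [-> //|h6].
have hq := Q u q q' p h2 h3 h1 h6 (_ : q != p) (_ : q' != p).
rewrite eq_sym h4 eq_sym h5 in hq.
rewrite /f (wsym q p) (wsym q' p) in hq *; lra.
Qed.

Lemma indep u p q p' q' : u != p -> u != q -> u != p' -> u != q' -> p != q -> p' != q' ->
  f u p q = f u p' q'.
Proof.
move=> h1 h2 h3 h4 h5 h6; case: (eqVneq q' p) => [e|hq'p].
  rewrite e in h6 *; rewrite (fsym u p' p); apply: changeR => //; by rewrite eq_sym.
rewrite (@changeR u p q q' h1 h2 h4 h5); last by rewrite eq_sym.
rewrite (fsym u p q') (@changeR u q' p p' h4 h1 h3 hq'p); first exact: fsym.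
by rewrite eq_sym.
Qed.

Lemma exists_b : exists b : 'I_r -> R, forall u v, u != v -> w u v = b u + b v.
Proof.
pose pu (u : 'I_r) := odflt u [pick x | x != u].
pose qu (u : 'I_r) := odflt u [pick x | (x != u) && (x != pu u)].
have hpu : forall u, u != pu u.
  move=> u; rewrite /pu; case: pickP => [x /= hx|hn] /=; first by rewrite eq_sym.
  have [x hx] := avoid [:: u] (leq_trans (isT : (1 < 4)%N) hr).
  by move: (hn x); rewrite /= -[x != u]negbK; move: hx; rewrite inE => ->.
have hqu : forall u, (u != qu u) && (pu u != qu u).
  move=> u; rewrite /qu; case: pickP => [x /= /andP[h1 h2]|hn] /=.
    by rewrite eq_sym h1 eq_sym h2.
  have [x hx] := avoid [:: u; pu u] (leq_trans (isT : (2 < 4)%N) hr).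
  by move: (hn x) hx; rewrite /= !inE negb_or => -> .
exists (fun u => f u (pu u) (qu u) / 2) => u v huv.
have [x hx] := avoid [:: u; v] (leq_trans (isT : (2 < 4)%N) hr).
move: hx; rewrite !inE negb_or => /andP[hxu hxv].
have /andP[q1 q2] := hqu u; have /andP[q3 q4] := hqu v.
move: (hpu u) (hpu v) => p1 p2.
have e1 : f u (pu u) (qu u) = f u v x by apply: indep => //; rewrite eq_sym.
have e2 : f v (pu v) (qu v) = f v u x by apply: indep => //; rewrite eq_sym.
rewrite e1 e2.
rewrite /f (wsym v u); lra.
Qed.

End E.


Lemma main (hsum : \sum_(u < r) \sum_(v < r | (u < v)%N) phi w u v = (r%:R - 1) / 2) :
  exists a : 'I_r -> R, forall u v : 'I_r, u != v -> phi w u v = (a u + a v) / 2.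
Proof.
have hQ : forall a b c d : 'I_r, a != b -> a != c -> a != d -> b != c ->
    b != d -> c != d -> w a b + w c d = w a c + w b d.
  move=> a b c d h1 h2 h3 h4 h5 h6; apply: Qlem hsum _ _ _ _ _.
  by rewrite /= !inE !negb_or h1 h2 h3 h4 h5 h6.
have [b hb] := exists_b hQ.
pose C := \sum_x b x + \sum_x b x.
have hW : forall s : 'S_r, Wt s = C.
  move=> s; rewrite /Wt.
  under eq_bigr => i _ do rewrite hb ?(inj_eq perm_inj) 1?eq_sym ?ordS_neq //.
  rewrite big_split /=; congr (_ + _); first by rewrite [RHS](reindex_inj (@perm_inj _ s)).
  by rewrite [RHS](reindex_inj (@perm_inj _ s)) [RHS](reindex_inj (@ordS_inj r)).
have hC : 0 < C by rewrite -(hW 1%g) Wt_pos.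
exists (fun x => 2 * b x / C) => u v huv.
have u1 : uniq [:: u; v] by rewrite /= inE huv.
have [rest [u1' s1]] := extend _ u1.
have [σ e1] := perm_of_seq _ u1' s1.
have hS0 : (ordS i0 : nat) = 1%N by rewrite /= modn_small //; lia.
have eu : σ i0 = u by rewrite (perm_nth _ _ _ e1).
have ev : σ (ordS i0) = v by rewrite (perm_nth _ _ _ e1) hS0.
have hCw : Cw w u v = C by rewrite -(hW σ) -(Heq hsum σ i0) eu ev.
rewrite /phi hCw hb //.
field; exact: lt0r_neq0.
Qed.

End S.

Theorem proposition3p7 (R : realType) (r : nat) (w : 'I_r -> 'I_r -> R)
  (hr : (4 <= r)%N)
  (wsym : forall u v : 'I_r, w u v = w v u)
  (wpos : forall u v : 'I_r, u != v -> 0 < w u v)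
  (hsum : \sum_(u < r) \sum_(v < r | (u < v)%N) phi w u v = (r%:R - 1) / 2) :
  exists a : 'I_r -> R,
    forall u v : 'I_r, u != v -> phi w u v = (a u + a v) / 2.
Proof. exact: (@main R r w hr wsym wpos hsum). Qed.
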